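(* Let $\psi:[0,\infty]\to[0,\infty]$ be a sense-reversing homeomorphism and $\varphi:[0,\infty]\to[0,\infty]$ a monotone function. Then $$[\psi\circ\varphi]^{-1}(\tau)=\varphi^{-1}\circ\psi^{-1}(\tau)\quad\forall\tau\in[0,\infty],$$ $$[\varphi\circ\psi]^{-1}(\tau)\le\psi^{-1}\circ\varphi^{-1}(\tau)\quad\forall\tau\in[0,\infty],$$ and, except for a countable collection of $\tau\in[0,\infty]$, $[\varphi\circ\psi]^{-1}(\tau)=\psi^{-1}\circ\varphi^{-1}(\tau)$. The last equality holds for all $\tau\in[0,\infty]$ if and only if $\varphi$ is strictly monotone.
   Context: Inverse functions of monotone functions are defined as follows: for a non-decreasing $\Phi:[0,\infty]\to[0,\infty]$, $\Phi^{-1}(\tau)=\inf\{t\in[0,\infty]:\Phi(t)\ge\tau\}$; for a non-increasing $\varphi:[0,\infty]\to[0,\infty]$, $\varphi^{-1}(\tau)=\inf\{t\in[0,\infty]:\varphi(t)\le\tau\}$; in both cases $\inf\emptyset=\infty$. *)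

(* Defs.v *)
(* [0,oo] is modelled as the nonnegative part of \bar R. *)
From HB Require Import structures.
From mathcomp Require Import all_boot all_order all_algebra.
From mathcomp Require Import all_classical all_reals all_analysis.
Set Implicit Arguments. Unset Strict Implicit. Unset Printing Implicit Defensive.
Import Order.TTheory GRing.Theory Num.Theory.
Local Open Scope classical_set_scope.
Local Open Scope ring_scope.
Local Open Scope ereal_scope.

Section Defs.
Context {R : realType}.

Definition nonneg_ext : set (\bar R) := [set x | 0 <= x].

Definition maps_nonneg (f : \bar R -> \bar R) := forall x, 0 <= x -> 0 <= f x.

Definition homeo_nonneg (f : \bar R -> \bar R) :=
  exists g : \bar R -> \bar R,
    [/\ maps_nonneg f /\ maps_nonneg g,
        (forall x, 0 <= x -> g (f x) = x),
        (forall x, 0 <= x -> f (g x) = x),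
        {within nonneg_ext, continuous f} &
        {within nonneg_ext, continuous g}].

Definition sense_reversing (f : \bar R -> \bar R) :=
  forall x y, 0 <= x -> x < y -> f y < f x.

Definition monotone_sense (inc : bool) (f : \bar R -> \bar R) :=
  forall x y, 0 <= x -> x <= y -> if inc then f x <= f y else f y <= f x.

Definition strictly_monotone (f : \bar R -> \bar R) :=
  (forall x y, 0 <= x -> x < y -> f x < f y) \/
  (forall x y, 0 <= x -> x < y -> f y < f x).

(* generalized inverse of a monotone function of sense inc:
   inc = true : inf {t in [0,oo] | f t >= tau}
   inc = false: inf {t in [0,oo] | f t <= tau}; inf of the empty set is +oo *)
Definition ginv (inc : bool) (f : \bar R -> \bar R) (tau : \bar R) : \bar R :=
  ereal_inf [set t | 0 <= t /\ (if inc then tau <= f t else f t <= tau)].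

End Defs.

(* Main.v *)
Require Import Defs.
From HB Require Import structures.
From mathcomp Require Import all_boot all_order all_algebra.
From mathcomp Require Import all_classical all_reals all_analysis.
Import Order.TTheory GRing.Theory Num.Theory.
Local Open Scope classical_set_scope.
Local Open Scope ring_scope.
Local Open Scope ereal_scope.

Section Aux.
Context {R : realType}.
Variables (psi g : \bar R -> \bar R).
Hypotheses (psi0 : maps_nonneg psi) (g0 : maps_nonneg g)
  (gpsi : forall x, 0 <= x -> g (psi x) = x)
  (psig : forall x, 0 <= x -> psi (g x) = x)
  (dec : sense_reversing psi).

Lemma psi_le x y : 0 <= x -> 0 <= y -> (psi x <= psi y) = (y <= x).
Proof.
move=> x0 y0; apply/idP/idP.
  move=> h; rewrite leNgt; apply/negP => xy.
  by have := dec _ _ x0 xy; rewrite ltNge h.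
rewrite le_eqVlt => /orP[/eqP->//|yx].
exact: ltW (dec _ _ y0 yx).
Qed.

Lemma psi_leg x y : 0 <= x -> 0 <= y -> (psi x <= y) = (g y <= x).
Proof. by move=> x0 y0; rewrite -{1}(psig _ y0) psi_le // g0. Qed.

Lemma psi_geg x y : 0 <= x -> 0 <= y -> (y <= psi x) = (x <= g y).
Proof. by move=> x0 y0; rewrite -{1}(psig _ y0) psi_le // g0. Qed.

Lemma psi_ltg x y : 0 <= x -> 0 <= y -> (psi x < y) = (g y < x).
Proof. by move=> x0 y0; rewrite !ltNge psi_geg. Qed.

Lemma psi_gtg x y : 0 <= x -> 0 <= y -> (y < psi x) = (x < g y).
Proof. by move=> x0 y0; rewrite !ltNge psi_leg. Qed.

Lemma g_le x y : 0 <= x -> 0 <= y -> (g x <= g y) = (y <= x).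
Proof. by move=> x0 y0; rewrite -psi_leg ?g0 // psig. Qed.

Lemma g_lt x y : 0 <= x -> 0 <= y -> (g x < g y) = (y < x).
Proof. by move=> x0 y0; rewrite !ltNge g_le. Qed.

Lemma ginv_psi tau : 0 <= tau -> ginv false psi tau = g tau.
Proof.
move=> t0; rewrite /ginv.
have -> : [set t | 0 <= t /\ psi t <= tau] = [set t | 0 <= t /\ g tau <= t].
  by apply/seteqP; split => t /= [t0' h]; split => //; move: h; rewrite psi_leg.
apply/eqP; rewrite eq_le; apply/andP; split.
  by apply: ge_ereal_inf; exists (g tau) => //; split => //; apply: g0.
by apply/ereal_infP => y [].
Qed.

Lemma inf_ge0 (P : \bar R -> Prop) : 0 <= ereal_inf [set t | 0 <= t /\ P t].
Proof. by apply/ereal_infP => y []. Qed.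

End Aux.

Section Aux2.
Context {R : realType}.
Variables (psi g phi : \bar R -> \bar R) (inc : bool).
Hypotheses (psi0 : maps_nonneg psi) (g0 : maps_nonneg g)
  (gpsi : forall x, 0 <= x -> g (psi x) = x)
  (psig : forall x, 0 <= x -> psi (g x) = x)
  (dec : sense_reversing psi)
  (phi0 : maps_nonneg phi) (mono : monotone_sense inc phi).

Lemma part2 tau : 0 <= tau ->
  ginv (~~ inc) (phi \o psi) tau <= g (ginv inc phi tau).
Proof.
move=> t0; set s := ginv inc phi tau.
have s0 : 0 <= s by apply: inf_ge0.
have nD : forall u, 0 <= u -> u < s ->
    (if ~~ inc then tau <= phi u else phi u <= tau).
  move=> u u0 us.
  have nd : ~~ (if inc then tau <= phi u else phi u <= tau).
    apply/negP => h; have : s <= u by apply/ereal_inf_lbound.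
    by rewrite leNgt us.
  by case: inc nd => /=; rewrite -ltNge => /ltW.
have gs0 : 0 <= g s by apply: g0.
case E : (g s) => [r| |]; last by rewrite E in gs0.
- apply/lee_addgt0Pr => e e0.
  apply: ge_ereal_inf; exists (r%:E + e%:E) => //; split.
    by rewrite -E adde_ge0 // lee_fin ltW.
  have t0' : 0 <= r%:E + e%:E by rewrite -E adde_ge0 // lee_fin ltW.
  apply: nD; first exact: psi0.
  by rewrite (@psi_ltg _ _ _ g0 psig dec) // E -EFinD lte_fin ltrDl.
- by rewrite leey.
Qed.

Lemma key tau : 0 <= tau ->
  ginv (~~ inc) (phi \o psi) tau < g (ginv inc phi tau) ->
  exists v u, [/\ 0 <= v, v < u, phi v = tau & phi u = tau].
Proof.
move=> t0; set s := ginv inc phi tau.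
have s0 : 0 <= s by apply: inf_ge0.
move=> /ereal_inf_lt [t [t0' /= Ct] tgs].
have u0 : 0 <= psi t by apply: psi0.
have su : s < psi t by rewrite (@psi_gtg _ _ _ g0 psig dec).
move: su => /ereal_inf_lt [v [v0 Dv] vu].
exists v, (psi t); split => //.
  have := mono _ _ v0 (ltW vu).
  by case: inc Ct Dv => /= Ct Dv h; apply/le_anti;
     rewrite ?Dv ?(le_trans h Ct) ?(le_trans Ct h).
have := mono _ _ v0 (ltW vu).
by case: inc Ct Dv => /= Ct Dv h; apply/le_anti;
   rewrite ?Ct ?(le_trans Dv h) ?(le_trans h Dv).
Qed.

End Aux2.

Theorem lemma2p5 (R : realType) (psi phi : \bar R -> \bar R) (inc : bool) :
  homeo_nonneg psi -> sense_reversing psi ->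
  maps_nonneg phi -> monotone_sense inc phi ->
  [/\ (forall tau, 0 <= tau ->
         ginv (~~ inc) (psi \o phi) tau = ginv inc phi (ginv false psi tau)),
      (forall tau, 0 <= tau ->
         ginv (~~ inc) (phi \o psi) tau <= ginv false psi (ginv inc phi tau)),
      (exists S : set (\bar R), countable S /\
         forall tau, 0 <= tau -> ~ S tau ->
           ginv (~~ inc) (phi \o psi) tau = ginv false psi (ginv inc phi tau)) &
      ((forall tau, 0 <= tau ->
          ginv (~~ inc) (phi \o psi) tau = ginv false psi (ginv inc phi tau))
       <-> strictly_monotone phi)].
Proof.
move=> [g [[p0 g0] gp pg _ _]] dec ph0 mono.
have RHS tau : 0 <= tau -> ginv false psi (ginv inc phi tau) = g (ginv inc phi tau).
  by move=> _; rewrite (@ginv_psi _ _ _ g0 pg dec) //; apply: inf_ge0.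
have P2 tau : 0 <= tau ->
    ginv (~~ inc) (phi \o psi) tau <= ginv false psi (ginv inc phi tau).
  by move=> t0; rewrite RHS //; apply: part2.
have K tau : 0 <= tau ->
    ginv (~~ inc) (phi \o psi) tau != ginv false psi (ginv inc phi tau) ->
    exists v u, [/\ 0 <= v, v < u, phi v = tau & phi u = tau].
  move=> t0 ne; apply: (@key _ psi g phi inc) => //.
  by move: ne (P2 tau t0); rewrite RHS // => ne le; rewrite lt_neqAle ne le.
split.
- move=> tau t0; rewrite (@ginv_psi _ _ _ g0 pg dec) // /ginv.
  congr ereal_inf; apply/seteqP; split => t /= [t0' h]; split => //;
    have f0 := ph0 t t0'; case: inc h {RHS K P2 mono} => /= h.
  + by rewrite -(@psi_leg _ _ _ g0 pg dec).
  + by rewrite -(@psi_geg _ _ _ g0 pg dec).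
  + by rewrite (@psi_leg _ _ _ g0 pg dec).
  + by rewrite (@psi_geg _ _ _ g0 pg dec).
- exact: P2.
- exists [set phi (ratr q)%:E | q in [set: rat]]; split.
    exact: (sub_countable (card_image_le _ _) (countableP _)).
  move=> tau t0 nS; apply/eqP; apply/negP => /negP ne.
  have [v [u [v0 vu pv pu]]] := K tau t0 ne.
  have [r vr] : exists r : R, v = r%:E.
    case: v v0 vu {pv} => [r _ _| _|]; [by exists r | | by []].
    by rewrite ltNge leey.
  have [b rb bu] : exists2 b : R, (r < b)%R & b%:E <= u.
    case: u vu {pu} => [b| |]; rewrite vr.
    + by rewrite lte_fin => rb; exists b.
    + by move=> _; exists (r + 1)%R; rewrite ?ltrDl ?leey.
    + by rewrite ltNge leNye.
  have [q] := rat_in_itvoo rb; rewrite in_itv /= => /andP[rq qb].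
  apply: nS; exists q => //.
  have vq : v <= (ratr q)%:E by rewrite vr lee_fin ltW.
  have qu : (ratr q)%:E <= u by rewrite (le_trans _ bu) // lee_fin ltW.
  have q0 : 0 <= (ratr q)%:E := le_trans v0 vq.
  have := mono _ _ v0 vq; have := mono _ _ q0 qu.
  by case: inc {mono K P2 RHS ne} => /= h1 h2; apply/le_anti/andP; split;
    first [by rewrite -pu | by rewrite -pv].
- split.
  + move=> H.
    have nconst x y : 0 <= x -> x < y -> phi x != phi y.
      move=> x0 xy; apply/negP => /eqP e.
      set tau := phi x.
      have t0 : 0 <= tau := ph0 x x0.
      have y0 : 0 <= y := le_trans x0 (ltW xy).
      have := H tau t0; rewrite RHS //.
      set s := ginv inc phi tau.
      have s0 : 0 <= s by apply: inf_ge0.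
      have sx : s <= x.
        by apply/ereal_inf_lbound; split => //; case: ifP.
      have Ly : ginv (~~ inc) (phi \o psi) tau <= g y.
        apply/ereal_inf_lbound; split; first exact: g0.
        by rewrite /= pg // -e; case: ifP.
      have gyx : g y < g x by rewrite (@g_lt _ _ _ g0 pg dec).
      have gxs : g x <= g s by rewrite (@g_le _ _ _ g0 pg dec).
      move=> Eq; have := le_lt_trans Ly (lt_le_trans gyx gxs).
      by rewrite Eq ltxx.
    case: inc mono nconst {H K P2 RHS} => mono nconst; [left|right] => x y x0 xy.
    * by rewrite lt_neqAle nconst // (mono _ _ x0 (ltW xy)).
    * by rewrite lt_neqAle eq_sym nconst // (mono _ _ x0 (ltW xy)).
  + move=> sm tau t0; apply/eqP; apply/negP => /negP ne.
    have [v [u [v0 vu pv pu]]] := K tau t0 ne.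
    case: sm => h; have := h _ _ v0 vu; by rewrite pv pu ltxx.
Qed.
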